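(* Let $X\in\mathbb{R}^{n\times d}$, $y\in\mathbb{R}^n$, and let $g:\mathbb{R}^d\to(-\infty,\infty]$ be a proper lower semicontinuous convex function with $g(k\beta)=kg(\beta)$ for all $k\ge0$, $\beta\in\mathbb{R}^d$, and with some $\beta\in\mathrm{relint}(\mathrm{dom}(g))$. For $\lambda>0$ consider the problem $\min_\beta \frac12\|\frac1\lambda y-X\beta\|_2^2+g(\beta)$, assumed to attain its minimum, with Fenchel–Rockafellar dual $\max_\theta -\frac12\|\theta\|_2^2+\frac1\lambda y^\top\theta-g^\star(X^\top\theta)$; let $\hat\beta^{(\lambda)}$ and $\hat\theta^{(\lambda)}$ be primal and dual optimal points, respectively. Fix $\lambda_0>0$ and define \[ \mathcal{R}^{\mathrm{Sasvi}}(\lambda_0)=\Big\{\theta\ \Big|\ 0\ge(y-\theta)^\top(\hat\theta^{(\lambda_0)}-\theta)\ \land\ 0\ge\big(\tfrac1{\lambda_0}y-\hat\theta^{(\lambda_0)}\big)^\top(\theta-\hat\theta^{(\lambda_0)})\Big\}, \] \[ \mathcal{R}^{\mathrm{DS}}(\hat\beta^{(\lambda_0)},\hat\theta^{(\lambda_0)})=\Big\{\theta\ \Big|\ \Big\|\theta-\tfrac12(\hat\theta^{(\lambda_0)}+y)\Big\|_2^2\le\tfrac14\|\hat\theta^{(\lambda_0)}-y\|_2^2\ \land\ 0\le g(\hat\beta^{(\lambda_0)})-\theta^\top X\hat\beta^{(\lambda_0)}\Big\}. \] Then $\mathcal{R}^{\mathrm{Sasvi}}(\lambda_0)=\mathc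al{R}^{\mathrm{DS}}(\hat\beta^{(\lambda_0)},\hat\theta^{(\lambda_0)})$.
   Context: $g^\star(v)=\sup_\beta v^\top\beta-g(\beta)$ is the Fenchel conjugate; $\mathrm{dom}(g)=\{\beta:|g(\beta)|<\infty\}$; $\mathrm{relint}$ is relative interior. Both sets are regions intended to contain the dual optimal point $\hat\theta^{(1)}$ of the $\lambda=1$ problem. *)

(* Defs.v *)
From HB Require Import structures.
From mathcomp Require Import all_boot all_order all_algebra.
From mathcomp Require Import all_classical all_reals all_analysis.
Set Implicit Arguments. Unset Strict Implicit. Unset Printing Implicit Defensive.
Import Order.TTheory GRing.Theory Num.Theory.
Import numFieldNormedType.Exports.
Local Open Scope classical_set_scope.
Local Open Scope ring_scope.

Section Defs.
Variable R : realType.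

Definition dotv (m : nat) (u v : 'cV[R]_m) : R := (u^T *m v) 0 0.
Definition sqnorm (m : nat) (u : 'cV[R]_m) : R := dotv u u.

Definition edom (d : nat) (g : 'cV[R]_d -> \bar R) : set 'cV[R]_d :=
  [set b | g b \is a fin_num].

Definition aff_hull (d : nat) (S : set 'cV[R]_d) : set 'cV[R]_d :=
  [set x | exists (k : nat) (p : 'I_k -> 'cV[R]_d) (w : 'I_k -> R),
     (forall i, S (p i)) /\ \sum_(i < k) w i = 1 /\
     x = \sum_(i < k) w i *: p i].

Definition relint (d : nat) (S : set 'cV[R]_d) : set 'cV[R]_d :=
  [set x | S x /\ exists e : R, 0 < e /\
     forall z, aff_hull S z -> sqnorm (z - x) < e ^+ 2 -> S z].

Definition proper_fun (d : nat) (g : 'cV[R]_d -> \bar R) : Prop :=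
  (forall b, g b != -oo%E) /\ (exists b, g b != +oo%E).

Definition convex_efun (d : nat) (g : 'cV[R]_d -> \bar R) : Prop :=
  forall (b1 b2 : 'cV[R]_d) (t : R), 0 < t < 1 ->
    let b := (t *: b1 + (1 - t) *: b2)%R in
    (g b <= t%:E * g b1 + (1 - t)%:E * g b2)%E.

Definition fconj (d : nat) (g : 'cV[R]_d -> \bar R) (v : 'cV[R]_d) : \bar R :=
  ereal_sup [set ((dotv v b)%:E - g b)%E | b in [set: 'cV[R]_d]].

Definition primal_obj (n d : nat) (X : 'M[R]_(n, d)) (y : 'cV[R]_n)
  (g : 'cV[R]_d -> \bar R) (lam : R) (b : 'cV[R]_d) : \bar R :=
  ((2^-1 * sqnorm (lam^-1 *: y - X *m b))%:E + g b)%E.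

Definition dual_obj (n d : nat) (X : 'M[R]_(n, d)) (y : 'cV[R]_n)
  (g : 'cV[R]_d -> \bar R) (lam : R) (th : 'cV[R]_n) : \bar R :=
  ((- (2^-1 * sqnorm th) + lam^-1 * dotv y th)%:E - fconj g (X^T *m th))%E.

Definition R_Sasvi (n : nat) (y : 'cV[R]_n) (lam0 : R) (thhat : 'cV[R]_n)
  : set 'cV[R]_n :=
  [set th | dotv (y - th) (thhat - th) <= 0 /\
            dotv (lam0^-1 *: y - thhat) (th - thhat) <= 0].

Definition R_DS (n d : nat) (X : 'M[R]_(n, d)) (y : 'cV[R]_n)
  (g : 'cV[R]_d -> \bar R) (bhat : 'cV[R]_d) (thhat : 'cV[R]_n)
  : set 'cV[R]_n :=
  [set th | sqnorm (th - 2^-1 *: (thhat + y)) <= 4^-1 * sqnorm (thhat - y) /\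
            (0 <= g bhat - (dotv th (X *m bhat))%:E)%E].

End Defs.

(* Main.v *)
Require Import Defs.
From HB Require Import structures.
From mathcomp Require Import all_boot all_order all_algebra.
From mathcomp Require Import all_classical all_reals all_analysis.
From mathcomp Require Import ring lra.
Import Order.TTheory GRing.Theory Num.Theory.
Import numFieldNormedType.Exports.
Local Open Scope classical_set_scope.
Local Open Scope ring_scope.

Lemma dotvE (R : realType) (m : nat) (u v : 'cV[R]_m) :
  dotv u v = \sum_i u i 0 * v i 0.
Proof. by rewrite /dotv mxE; apply: eq_bigr => i _; rewrite mxE. Qed.

Lemma dotvC (R : realType) (m : nat) (u v : 'cV[R]_m) : dotv u v = dotv v u.
Proof. by rewrite !dotvE; apply: eq_bigr => i _; rewrite mulrC. Qed.

Lemma dotv_adj (R : realType) (n d : nat) (X : 'M[R]_(n, d)) a b :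
  dotv (X^T *m a) b = dotv a (X *m b).
Proof. by rewrite /dotv trmx_mul trmxK mulmxA. Qed.

Lemma sqnorm_ge0 (R : realType) (m : nat) (u : 'cV[R]_m) : 0 <= sqnorm u.
Proof. by rewrite /sqnorm dotvE; apply: sumr_ge0 => i _; rewrite -expr2 sqr_ge0. Qed.

Lemma sqnorm_eq0 (R : realType) (m : nat) (u : 'cV[R]_m) : sqnorm u <= 0 -> u = 0.
Proof.
move=> H; have H0 : sqnorm u = 0 by apply/eqP; rewrite eq_le H sqnorm_ge0.
move: H0; rewrite /sqnorm dotvE => H0.
apply/matrixP => i j; rewrite (ord1 j) mxE.
have hp : forall k : 'I_m, predT k -> 0 <= u k 0 * u k 0 by move=> k _; rewrite -expr2 sqr_ge0.
have h := @psumr_eq0P _ _ predT (fun i => u i 0 * u i 0) hp H0 i isT.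
by apply/eqP; rewrite -sqrf_eq0 expr2 h.
Qed.

Lemma pos_small (R : realType) (A B : R) :
  (forall s, 0 < s < 1 -> A <= s * B) -> A <= 0.
Proof.
move=> H; rewrite leNgt; apply/negP => HA.
set s := A / (A + `|B| + 1).
have hd : 0 < A + `|B| + 1 by have := normr_ge0 B; lra.
have hs : 0 < s < 1.
  apply/andP; split; first by rewrite divr_gt0.
  by rewrite ltr_pdivrMr // mul1r; have := normr_ge0 B; lra.
have := H s hs.
have hB : s * B <= s * `|B| by rewrite ler_pM2l ?ler_norm //; case/andP: hs.
have : s * `|B| < A.
  rewrite /s mulrC mulrA ltr_pdivrMr // .
  have := normr_ge0 B. nra.
lra.
Qed.

Lemma dotvDr (R : realType) (m : nat) (a b c : 'cV[R]_m) :
  dotv a (b + c) = dotv a b + dotv a c.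
Proof. by rewrite !dotvE -big_split; apply: eq_bigr => i _; rewrite !mxE mulrDr. Qed.

Lemma dotvBr (R : realType) (m : nat) (a b c : 'cV[R]_m) :
  dotv a (b - c) = dotv a b - dotv a c.
Proof. by rewrite !dotvE -sumrB; apply: eq_bigr => i _; rewrite !mxE /=; ring. Qed.

Lemma dotvZr (R : realType) (m : nat) (k : R) (a b : 'cV[R]_m) :
  dotv a (k *: b) = k * dotv a b.
Proof. by rewrite !dotvE mulr_sumr; apply: eq_bigr => i _; rewrite !mxE /=; ring. Qed.

Lemma dotvBl (R : realType) (m : nat) (a b c : 'cV[R]_m) :
  dotv (b - c) a = dotv b a - dotv c a.
Proof. by rewrite dotvC dotvBr !(@dotvC _ _ a). Qed.

Lemma dotvZl (R : realType) (m : nat) (k : R) (a b : 'cV[R]_m) :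
  dotv (k *: b) a = k * dotv b a.
Proof. by rewrite dotvC dotvZr dotvC. Qed.

Lemma sqnorm_sub (R : realType) (m : nat) (s : R) (a z : 'cV[R]_m) :
  sqnorm (a - s *: z) = sqnorm a - 2 * s * dotv a z + s ^+ 2 * sqnorm z.
Proof.
rewrite /sqnorm !dotvBl !dotvBr !dotvZl !dotvZr (@dotvC _ _ z a); ring.
Qed.

Lemma sasvi_id (R : realType) (m : nat) (th a y : 'cV[R]_m) :
  sqnorm (th - 2^-1 *: (a + y)) - 4^-1 * sqnorm (a - y) = dotv (y - th) (a - th).
Proof.
rewrite /sqnorm !dotvE mulr_sumr -sumrB; apply: eq_bigr => i _; rewrite !mxE.
by rewrite /=; field.
Qed.

Theorem theorem8 (R : realType) (n d : nat) (X : 'M[R]_(n, d)) (y : 'cV[R]_n)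
  (g : 'cV[R]_d -> \bar R)
  (g_proper : proper_fun g)
  (g_lsc : lower_semicontinuous g)
  (g_convex : convex_efun g)
  (g_homog : forall (k : R) (b : 'cV[R]_d), 0 <= k -> g (k *: b) = (k%:E * g b)%E)
  (g_relint : exists b, relint (edom g) b)
  (lam0 : R) (lam0_pos : 0 < lam0)
  (bhat : 'cV[R]_d) (thhat : 'cV[R]_n)
  (bhat_opt : forall b, (primal_obj X y g lam0 bhat <= primal_obj X y g lam0 b)%E)
  (thhat_opt : forall th, (dual_obj X y g lam0 th <= dual_obj X y g lam0 thhat)%E) :
  R_Sasvi y lam0 thhat = R_DS X y g bhat thhat.
Proof.
set u := lam0^-1 *: y.
set w := X *m bhat.
set ths := u - w.
have g0 : g 0 = 0%E.
  by have := g_homog 0 0 (lexx 0); rewrite scale0r mul0e.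
have [G gG] : exists G, g bhat = G%:E.
  move: (bhat_opt 0); rewrite /primal_obj g0 adde0.
  case E: (g bhat) => [G| |]; first by exists G.
    by rewrite addey.
  by move: (g_proper.1 bhat); rewrite E.
have L : forall c r, g c = r%:E -> dotv ths (X *m (c - bhat)) <= r - G.
  move=> c r gc; rewrite -subr_le0.
  set z := X *m (c - bhat).
  apply: (@pos_small _ _ (sqnorm z / 2)) => s hs.
  have hc := g_convex c bhat s hs; simpl in hc.
  have ho := bhat_opt (s *: c + (1 - s) *: bhat).
  rewrite /primal_obj in ho.
  have eq1 : s *: c + (1 - s) *: bhat = bhat + s *: (c - bhat).
    by apply/matrixP => i j; rewrite !mxE /=; ring.
  have eq2 : u - X *m (s *: c + (1 - s) *: bhat) = ths - s *: z.
    by rewrite eq1 mulmxDr -scalemxAr opprD addrA.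
  rewrite eq2 in ho.
  rewrite gc gG -!EFinM -EFinD in hc.
  have := le_trans ho (leeD2l _ hc).
  rewrite gG -!EFinD lee_fin sqnorm_sub -/w -/ths => H.
  case/andP: hs => s0 s1.
  have ns := @sqnorm_ge0 _ _ z.
  nra.
have hG1 : G <= dotv ths w.
  have := L 0 0 g0; rewrite sub0r mulmxN -/w.
  have -> : dotv ths (- w) = - dotv ths w.
    by rewrite -sub0r dotvBr -(scale0r (0 : 'cV[R]_n)) dotvZr mul0r sub0r.
  lra.
have hG2 : dotv ths w <= G.
  have g2 : g (2 *: bhat) = (2 * G)%:E by rewrite g_homog // gG -EFinM.
  have := L _ _ g2.
  have -> : 2 *: bhat - bhat = bhat by rewrite scaler_nat mulr2n addrK.
  rewrite -/w; lra.
have hGe : G = dotv ths w by apply/eqP; rewrite eq_le hG1 hG2.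
have hsub : forall c, ((dotv ths (X *m c))%:E - g c <= 0)%E.
  move=> c; case E: (g c) => [r| |].
  - have := L c r E; rewrite mulmxBr dotvBr -/w -EFinB lee_fin; lra.
  - by rewrite /= leNye.
  - by move: (g_proper.1 c); rewrite E.
have hF : (fconj g (X^T *m ths) <= 0)%E.
  apply: ge_ereal_sup => _ [b _ <-]; rewrite dotv_adj; exact: hsub.
have hF2 : ((dotv (X^T *m thhat) bhat - G)%:E <= fconj g (X^T *m thhat))%E.
  by rewrite EFinB -gG; apply: ereal_sup_ubound; exists bhat.
have ho := thhat_opt ths.
rewrite /dual_obj in ho.
have h1 := leeB (lexx (- (2^-1 * sqnorm ths) + lam0^-1 * dotv y ths)%:E) hF.
rewrite sube0 in h1.
have h2 := leeB (lexx (- (2^-1 * sqnorm thhat) + lam0^-1 * dotv y thhat)%:E) hF2.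
have := le_trans h1 (le_trans ho h2).
rewrite -EFinB lee_fin dotv_adj -/w => H.
have hth : thhat = ths.
  apply/eqP; rewrite -subr_eq0; apply/eqP; apply: sqnorm_eq0.
  have eZ : forall v, lam0^-1 * dotv y v = dotv u v by move=> v; rewrite dotvZl.
  move: H; rewrite hGe !eZ /sqnorm /ths !dotvBl !dotvBr.
  rewrite !(@dotvC _ _ u) !(@dotvC _ _ w) (@dotvC _ _ thhat u).
  move=> H.
  lra.
have hw : lam0^-1 *: y - thhat = w by rewrite hth /ths -/u opprB addrC subrK.
rewrite /R_Sasvi /R_DS hw gG; apply/seteqP; split => th /= [k1 k2]; split.
- by rewrite -subr_le0 sasvi_id.
- rewrite -EFinB lee_fin subr_ge0 hGe -hth.
  move: k2; rewrite dotvBr !(@dotvC _ _ w); lra.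
- by rewrite -sasvi_id subr_le0.
- move: k2; rewrite -EFinB lee_fin subr_ge0 hGe -hth dotvBr !(@dotvC _ _ w); lra.
Qed.
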